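(* Let $X$ be a topological space. The following are equivalent: (1) $X$ is a Baire space; (2) every cliquish function $f\colon X\to\mathbb R$ is pointwise discontinuous. Moreover, if $X$ is perfectly normal, (1) and (2) are equivalent to: (3) every function $f\colon X\to\mathbb R$ with the Lebesgue property is pointwise discontinuous.
   Context: A topological space is Baire if every nonempty open subset of it is nonmeager in it. For $f\colon X\to\mathbb R$: $f$ is cliquish if for every $\varepsilon>0$ and every nonempty open $U\subseteq X$ there is a nonempty open $O\subseteq U$ with $\operatorname{diam} f(O)<\varepsilon$; $f$ is pointwise discontinuous if the set of continuity points of $f$ is dense in $X$; $f$ has the Lebesgue property if for every $\varepsilon>0$ there are closed sets $X_n$ ($n\in\mathbb N$) with $X=\bigcup_n X_n$ and $\operatorname{diam} f(X_n)\le\varepsilon$ for all $n$. *)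

(* Defs.v *)
From HB Require Import structures.
From mathcomp Require Import all_boot all_order all_algebra.
From mathcomp Require Import all_classical all_reals all_analysis.
From mathcomp Require Import borel_hierarchy.
Set Implicit Arguments.
Unset Strict Implicit.
Unset Printing Implicit Defensive.
Import Order.TTheory GRing.Theory Num.Theory.
Import numFieldNormedType.Exports.
Local Open Scope classical_set_scope.
Local Open Scope ring_scope.

Definition nowhere_dense {T : topologicalType} (A : set T) : Prop :=
  (closure A)° = set0.

Definition meager {T : topologicalType} (A : set T) : Prop :=
  exists2 F : (set T)^nat, (forall n, nowhere_dense (F n)) &
    A `<=` \bigcup_n F n.

Definition Baire_space (T : topologicalType) : Prop :=
  forall U : set T, open U -> U !=set0 -> ~ meager U.

Definition perfectly_normal (T : topologicalType) : Prop :=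
  normal_space T /\ forall A : set T, closed A -> Gdelta A.

Definition diam {R : realType} (A : set R) : \bar R :=
  ereal_sup [set r : \bar R | exists a b, A a /\ A b /\ r = (`|a - b|)%:E].

Definition cliquish {T : topologicalType} {R : realType} (f : T -> R) : Prop :=
  forall (eps : R), 0 < eps -> forall U : set T, open U -> U !=set0 ->
    exists O : set T, [/\ open O, O !=set0, O `<=` U &
      (diam (f @` O) < eps%:E)%E].

Definition pointwise_discontinuous {T : topologicalType} {R : realType}
  (f : T -> R) : Prop :=
  dense [set x : T | {for x, continuous f}].

Definition lebesgue_property {T : topologicalType} {R : realType}
  (f : T -> R) : Prop :=
  forall (eps : R), 0 < eps ->
    exists2 F : (set T)^nat, (forall n, closed (F n)) /\ [set: T] = \bigcup_n F n &
      forall n, (diam (f @` F n) <= eps%:E)%E.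

(* Main.v *)
Require Import Defs.
From mathcomp Require Import all_boot all_order all_algebra.
From mathcomp Require Import all_classical all_reals all_analysis.
From mathcomp Require Import borel_hierarchy.
From mathcomp Require Import lra zify.
Set Implicit Arguments.
Unset Strict Implicit.
Unset Printing Implicit Defensive.
Import Order.TTheory GRing.Theory Num.Theory.
Import numFieldNormedType.Exports.
Local Open Scope classical_set_scope.
Local Open Scope ring_scope.

Section Diam.
Variable R : realType.

Lemma diam_ge (A : set R) a b : A a -> A b -> ((`|a - b|)%:E <= diam A)%E.
Proof. by move=> Aa Ab; apply: ereal_sup_ubound; exists a, b. Qed.

Lemma diam_le (A : set R) (r : R) :
  (forall a b, A a -> A b -> `|a - b| <= r) -> (diam A <= r%:E)%E.
Proof.
by move=> H; apply: ge_ereal_sup => _ [a [b [Aa [Ab ->]]]]; rewrite lee_fin H.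
Qed.
End Diam.

Section Top.
Variable T : topologicalType.
Variable R : realType.

Lemma cont_at (f : T -> R) x :
  (forall e : R, 0 < e -> exists V, [/\ open V, V x & forall y, V y -> `|f x - f y| < e]) ->
  {for x, continuous f}.
Proof.
move=> H; apply/cvgrPdist_lt => e e0.
have [V [oV Vx HV]] := H e e0.
apply: (@filterS _ _ _ V); first by move=> y /HV.
by apply: open_nbhs_nbhs; split.
Qed.

Lemma cont_atE (f : T -> R) x : {for x, continuous f} ->
  forall e : R, 0 < e -> exists V, [/\ open V, V x & forall y, V y -> `|f x - f y| < e].
Proof.
move=> /cvgrPdist_lt H e e0.
have := H e e0; rewrite nbhsE => -[B [oB Bx] BP].
by exists B; split => // y /BP.
Qed.

Lemma open_sub_int (W K : set T) : open W -> W `<=` K -> W `<=` K°.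
Proof.
move=> oW WK x Wx; apply: (@filterS _ _ _ W) => //.
by apply: open_nbhs_nbhs; split.
Qed.

Lemma setD_nd (W K : set T) : open W -> W !=set0 -> closed K -> K° = set0 ->
  open (W `&` ~` K) /\ (W `&` ~` K) !=set0.
Proof.
move=> oW [w Ww] cK K0; split.
  by apply: openI => //; rewrite openC.
apply/set0P/eqP => H.
have WK : W `<=` K.
  move=> x Wx; apply/not_notP => Kx.
  by have : (W `&` ~` K) x by []; rewrite H.
by have := open_sub_int oW WK Ww; rewrite K0.
Qed.
End Top.

Lemma inv_nat_lt (R : realType) (e : R) : 0 < e -> exists n : nat, n.+1%:R^-1 < e.
Proof.
move=> e0; exists (Num.truncn e^-1).
rewrite invf_plt ?unfold_in //=.
exact: truncnS_gt.
Qed.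
Section A.
Variable T : topologicalType.
Variable R : realType.

Lemma baire_cliquish (f : T -> R) : Baire_space T -> cliquish f ->
  pointwise_discontinuous f.
Proof.
move=> B cf O O0 oO; apply/set0P/eqP => OC.
pose S n := [set x | exists V, [/\ open V, V x & (diam (f @` V) < (n.+1%:R^-1)%:E)%E]].
have oS n : open (S n).
  rewrite openE => x [V [oV Vx dV]].
  apply: (@filterS _ _ _ V); last by apply: open_nbhs_nbhs; split.
  by move=> y Vy; exists V; split.
apply: (B O oO O0); exists (fun n => ~` S n).
  move=> n; rewrite /nowhere_dense.
  have cD : closed (~` S n) by rewrite closedC.
  rewrite -(proj1 (closure_id _) cD).
  apply/eqP/negPn/negP => /set0P [z].
  rewrite /interior nbhsE => -[Bz [oB Bz0] BS].
  have h0 : 0 < n.+1%:R^-1 :> R by [].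
  have hB : Bz !=set0 by exists z.
  have [W1 [oW1 [w Ow] OB dW1]] := cf _ h0 Bz oB hB.
  apply: (BS w (OB w Ow)); by exists W1; split.
move=> x Ox; apply/not_notP => /= Hx.
have Cx : {for x, continuous f}.
  apply: cont_at => e e0.
  have [n ln] := inv_nat_lt e0.
  have [V [oV Vx dV]] : S n x by apply/not_notP => h; apply: Hx; exists n.
  exists V; split => // y Vy.
  apply: (lt_trans _ ln); rewrite -lte_fin; apply: (le_lt_trans _ dV).
  by apply: diam_ge; [exists x | exists y].
have : (O `&` [set x | {for x, continuous f}]) x by [].
by rewrite OC.
Qed.
End A.

Section B.
Variable T : topologicalType.
Variable R : realType.

Lemma diam_sub (A B : set R) : A `<=` B -> (diam A <= diam B)%E.
Proof.
move=> AB; apply: ereal_sup_le => _ [a [b [Aa [Ab ->]]]].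
by exists a, b; split; [apply: AB|split; [apply: AB|]].
Qed.

Lemma baire_leb_cliquish (f : T -> R) : Baire_space T -> lebesgue_property f ->
  cliquish f.
Proof.
move=> B lf e e0 U oU U0.
have e20 : 0 < e / 2 by rewrite divr_gt0.
have [F [cF FT] dF] := lf _ e20.
have [n Hn] : exists n, (closure (U `&` F n))° !=set0.
  apply/not_notP => H; apply: (B U oU U0); exists (fun n => U `&` F n).
    move=> n; apply/eqP/negPn/negP => /set0P ne; apply: H; exists n.
    exact: ne.
  move=> x Ux.
  have : [set: T] x by [].
  rewrite FT => -[n _ Fx]; exists n => //.
have [z] := Hn; rewrite /interior nbhsE => -[B1 [oB Bz] BS].
have cl : closure (U `&` F n) `<=` F n.
  rewrite [X in _ `<=` X](proj1 (closure_id _) (cF n)).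
  by apply: closureS => x [].
exists (B1 `&` U); split.
- exact: openI.
- have := BS z Bz => /(_ B1) [].
    by apply: open_nbhs_nbhs; split.
  by move=> w [[Uw _] Bw]; exists w.
- by move=> x [].
- apply: (le_lt_trans (diam_sub (B := f @` F n) _)).
    by move=> _ [x [Bx _] <-]; exists x => //; apply: cl; apply: BS.
  apply: (le_lt_trans (dF n)); rewrite lte_fin.
  by rewrite ltr_pdivrMr // ltr_pMr // ltr1n.
Qed.
End B.
Section C.
Variable T : topologicalType.
Variable R : realType.
Variable K : (set T)^nat.

Definition fK (x : T) : R :=
  match pselect (exists n, `[< K n x >]) with
  | left h => (ex_minn h).+1%:R^-1
  | right _ => 0 end.

Lemma min_idx x : (exists n, K n x) -> exists m, K m x /\ forall i, (i < m)%N -> ~ K i x.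
Proof.
move=> [n Kn].
have h : exists n, `[< K n x >] by exists n; apply/asboolP.
case: (ex_minnP h) => m /asboolP Km minm; exists m; split => // i im Ki.
have := minm i (introT (asboolP _) Ki); lia.
Qed.

Lemma fK_eq x n : K n x -> (forall i, (i < n)%N -> ~ K i x) -> fK x = n.+1%:R^-1.
Proof.
move=> Kn Hn; rewrite /fK; case: pselect => [h|]; last first.
  by move=> H; exfalso; apply: H; exists n; apply/asboolP.
case: ex_minnP => m /asboolP Km minm.
have mn : (m <= n)%N by apply: minm; apply/asboolP.
have nm : (n <= m)%N.
  rewrite leqNgt; apply/negP => /Hn; exact.
by have -> : m = n by apply/eqP; rewrite eqn_leq mn nm.
Qed.

Lemma fK_le x k : (forall i, (i < k)%N -> ~ K i x) -> 0 <= fK x <= k.+1%:R^-1.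
Proof.
move=> Hk; rewrite /fK; case: pselect => [h|_]; last by rewrite lexx invr_ge0 ler0n.
case: ex_minnP => m /asboolP Km minm.
have km : (k <= m)%N by rewrite leqNgt; apply/negP => /Hk; exact.
rewrite invr_ge0 ler0n /= lef_pV2 ?posrE ?ltr0n // ler_nat; lia.
Qed.
End C.

Section D.
Variable T : topologicalType.
Variable R : realType.
Variable K : (set T)^nat.
Hypothesis cK : forall n, closed (K n).
Hypothesis iK : forall n, (K n)° = set0.

Lemma shrink k (W : set T) : open W -> W !=set0 ->
  exists W1 : set T, [/\ open W1, W1 !=set0, W1 `<=` W &
    forall y, W1 y -> forall i, (i < k)%N -> ~ K i y].
Proof.
elim: k W => [|k IH] W oW W0.
  by exists W; split.
have [W1 [oW1 W10 W1W HW1]] := IH W oW W0.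
have [oW2 W20] := setD_nd oW1 W10 (@cK k) (@iK k).
exists (W1 `&` ~` K k); split => //.
  by move=> y [/W1W].
move=> y [W1y nK] i; rewrite ltnS leq_eqVlt => /orP [/eqP -> //|ik].
exact: HW1.
Qed.

Lemma absle (a b c : R) : 0 <= a <= c -> 0 <= b <= c -> `|a - b| <= c.
Proof.
move=> /andP [a0 ac] /andP [b0 bc]; rewrite ler_norml; apply/andP; split; lra.
Qed.

Lemma fK_cliquish : cliquish (fK R K).
Proof.
move=> e e0 W oW W0.
have [k ke] := inv_nat_lt e0.
have [W1 [oW1 W10 W1W HW1]] := shrink k oW W0.
exists W1; split => //.
apply: (le_lt_trans _ (_ : (k.+1%:R^-1)%:E < e%:E)%E); last by rewrite lte_fin.
apply: diam_le => _ _ [a Wa <-] [b Wb <-].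
by apply: absle; apply: fK_le; [apply: HW1 Wa|apply: HW1 Wb].
Qed.

Lemma fK_discont (U : set T) : open U -> U `<=` \bigcup_n K n ->
  forall x, U x -> ~ {for x, continuous (fK R K)}.
Proof.
move=> oU UK x Ux cx.
have [m [Km Hm]] : exists m, K m x /\ forall i, (i < m)%N -> ~ K i x.
  by apply: min_idx; have [n _ Kn] := UK x Ux; exists n.
have fx := fK_eq R Km Hm.
have c0 : 0 < m.+1%:R^-1 / 2 :> R by rewrite divr_gt0 // invr_gt0 ltr0n.
have [V [oV Vx HV]] := cont_atE cx c0.
have [W1 [oW1 [y W1y] W1W HW1]] := shrink (m.+1 * 2) (openI oV oU) (ex_intro _ x (conj Vx Ux)).
have [Vy _] := W1W y W1y.
have := HV y Vy; rewrite fx.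
have /andP [_ fy] := fK_le R (HW1 y W1y).
have lt : ((m.+1 * 2).+1%:R^-1 : R) < m.+1%:R^-1 / 2.
  rewrite -[2 : R]/(2%:R) -invfM -natrM ltf_pV2 ?posrE ?ltr0n // ltr_nat; lia.
move=> h; have h2 := ler_norm (m.+1%:R^-1 - fK R K y).
have h3 := le_lt_trans h2 h.
have h4 := le_lt_trans fy lt.
by have := ltrD h3 h4; rewrite subrK -splitr ltxx.
Qed.
End D.

Section E.
Variable T : topologicalType.
Variable R : realType.
Variable K : (set T)^nat.
Hypothesis cK : forall n, closed (K n).
Hypothesis pn : forall A : set T, closed A -> Gdelta A.

Definition Ok k := [set x : T | forall i, (i < k)%N -> ~ K i x].

Lemma open_Ok k : open (Ok k).
Proof.
elim: k => [|k IH].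
  have -> : Ok 0 = setT by apply/seteqP; split => // x _ i.
  exact: openT.
have -> : Ok k.+1 = Ok k `&` ~` K k.
  apply/seteqP; split => x.
    by move=> H; split; [move=> i ik; apply: H; lia | apply: H].
  move=> [H nK] i; rewrite ltnS leq_eqVlt => /orP [/eqP -> //|ik]; exact: H.
by apply: openI => //; rewrite openC.
Qed.

Lemma Ok_cover k : exists A : (set T)^nat, (forall j, closed (A j)) /\
  Ok k = \bigcup_j A j.
Proof.
have cO : closed (~` Ok k) by rewrite closedC; exact: open_Ok.
have [G oG EG] := pn cO.
exists (fun j => ~` G j); split.
  by move=> j; rewrite closedC.
apply/seteqP; split => x.
  move=> Ox; apply/not_notP => H.
  have : (~` Ok k) x.
    by rewrite EG => j _; apply/not_notP => Gj; apply: H; exists j.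
  exact.
move=> [j _ nG]; apply/not_notP => nO.
have : (~` Ok k) x by [].
by rewrite EG => /(_ j I).
Qed.

Lemma fK_leb : lebesgue_property (fK R K).
Proof.
move=> e e0.
have [m me] := inv_nat_lt e0.
have [A HA] := choice (fun k => @Ok_cover k).
pose P (kj : nat * nat) : set T :=
  if (kj.1 < m)%N then K kj.1 `&` A kj.1 kj.2 else A m kj.2.
pose G (n : nat) : set T := if @unpickle (nat * nat)%type n is Some kj then P kj else set0.
exists G; first split.
- move=> n; rewrite /G; case: unpickle => [[k j]|]; last exact: closed0.
  rewrite /P /=; case: ifP => _; last exact: (proj1 (HA m) j).
  exact: closedI (@cK k) (proj1 (HA k) j).
- apply/seteqP; split => // x _.
  have [Om|nOm] := pselect (Ok m x).
    move: Om; rewrite (proj2 (HA m)) => -[j _ Ajx].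
    exists (pickle (m, j)) => //; rewrite /G pickleK /P /= ltnn //.
  have [i [im Ki]] : exists i, (i < m)%N /\ K i x.
    by apply/not_notP => H; apply: nOm => i im Ki; apply: H; exists i; split.
  have [i0 [Ki0 Hi0]] := min_idx (ex_intro _ i Ki).
  have i0m : (i0 < m)%N.
    rewrite ltnNge; apply/negP => mi0; apply: (Hi0 i) => //; lia.
  have : Ok i0 x by [].
  rewrite (proj2 (HA i0)) => -[j _ Ajx].
  exists (pickle (i0, j)) => //; rewrite /G pickleK /P /= i0m; by split.
- move=> n; apply: diam_le => _ _ [a Ga <-] [b Gb <-].
  move: Ga Gb; rewrite /G; case: unpickle => [[k j]|] //.
  rewrite /P /=; case: ifP => km.
    move=> [Ka Aa] [Kb Ab].
    have Oa : Ok k a by rewrite (proj2 (HA k)); exists j.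
    have Ob : Ok k b by rewrite (proj2 (HA k)); exists j.
    rewrite (fK_eq R Ka Oa) (fK_eq R Kb Ob) subrr normr0; exact: ltW.
  move=> Aa Ab.
  have Oa : Ok m a by rewrite (proj2 (HA m)); exists j.
  have Ob : Ok m b by rewrite (proj2 (HA m)); exists j.
  apply: le_trans (ltW me).
  by apply: absle; apply: fK_le.
Qed.
End E.

Lemma not_baire_counter (R : realType) (X : topologicalType)
  (P : (X -> R) -> Prop) :
  (forall K : (set X)^nat, (forall n, closed (K n)) -> (forall n, (K n)° = set0) ->
     P (fK R K)) ->
  (forall f : X -> R, P f -> pointwise_discontinuous f) -> Baire_space X.
Proof.
move=> HP H U oU U0 [F nF UF].
pose K n := closure (F n).
have cK n : closed (K n) by exact: closed_closure.
have iK n : (K n)° = set0 by exact: nF.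
have UK : U `<=` \bigcup_n K n.
  move=> x /UF [n _ Fx]; exists n => //; exact: subset_closure.
have [x [Ux cx]] := H _ (HP K cK iK) U U0 oU.
exact: (fK_discont cK iK oU UK Ux cx).
Qed.

Theorem proposition2p8 (R : realType) (X : topologicalType) :
  (Baire_space X <->
     forall f : X -> R, cliquish f -> pointwise_discontinuous f) /\
  (perfectly_normal X ->
     (Baire_space X <->
        forall f : X -> R, lebesgue_property f -> pointwise_discontinuous f)).
Proof.
split.
  split.
    by move=> B f cf; exact: baire_cliquish.
  apply: not_baire_counter => K cK iK; exact: fK_cliquish.
move=> [_ pnG]; split.
  by move=> B f lf; apply: baire_cliquish B (baire_leb_cliquish B lf).
apply: not_baire_counter => K cK iK; exact: fK_leb.
Qed.
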